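(* Let $\Gamma_1$ and $\Gamma_2$ be isomorphic finite connected graphs with vertices $p_1,\dots,p_n$ and $q_1,\dots,q_n$ respectively, $p_i$ corresponding to $q_i$. Let $\Gamma_0$ be the graph obtained from the disjoint union of $\Gamma_1$ and $\Gamma_2$ by additionally joining $p_i$ with $q_j$ by an edge whenever $p_j\sim p_i$. If $\lambda_1,\dots,\lambda_n$ are the eigenvalues (with multiplicity) of the normalized Laplacian of $\Gamma_1$ (equivalently of $\Gamma_2$), then the eigenvalues of the normalized Laplacian of $\Gamma_0$ are $\lambda_1,\dots,\lambda_n$ together with the eigenvalue $1$ with multiplicity $n$.
   Context: For a finite simple graph without isolated vertices, write $i\sim j$ for adjacency and $n_i$ for the degree of $i$. The normalized Laplacian acts on real functions $v$ on the vertices by $\Delta v(i)=v(i)-\frac{1}{n_i}\sum_{j\sim i}v(j)$; $\lambda$ is an eigenvalue with eigenfunction $u$ if $u\not\equiv 0$ and $\frac{1}{n_i}\sum_{j\sim i}u(j)=(1-\lambda)u(i)$ for all $i$. A graph with $N$ vertices has $N$ eigenvalues counted with multiplicity. *)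

(* Defs.v *)
From mathcomp Require Import all_boot all_order all_algebra.
Set Implicit Arguments. Unset Strict Implicit. Unset Printing Implicit Defensive.
Import Order.TTheory GRing.Theory Num.Theory.
Local Open Scope ring_scope.

Definition simple_graph (N : nat) (e : rel 'I_N) : Prop :=
  symmetric e /\ irreflexive e.

Definition connected_graph (N : nat) (e : rel 'I_N) : Prop :=
  forall i j : 'I_N, connect e i j.

Definition no_isolated (N : nat) (e : rel 'I_N) : Prop :=
  forall i : 'I_N, exists j, e i j.

Definition degree (N : nat) (e : rel 'I_N) (i : 'I_N) : nat := #|[set j | e i j]|.

Definition norm_laplacian (R : fieldType) (N : nat) (e : rel 'I_N) : 'M[R]_N :=
  \matrix_(i, j) ((i == j)%:R - (e i j)%:R / (degree e i)%:R).

Definition eigenvalues_mult (R : fieldType) (N : nat) (A : 'M[R]_N) (s : seq R) : Prop :=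
  char_poly A = \prod_(l <- s) ('X - l%:P).

(* Gamma_0: vertices 'I_(n+n); lshift i = p_i (copy Gamma_1), rshift j = q_j
   (copy Gamma_2, identified with Gamma_1 via p_i <-> q_i).
   p_i ~ p_j iff e i j; q_i ~ q_j iff e i j; p_i ~ q_j iff p_j ~ p_i. *)
Definition double_graph (n : nat) (e : rel 'I_n) : rel 'I_(n + n) :=
  fun a b =>
    match split a, split b with
    | inl i, inl j => e i j
    | inr i, inr j => e i j
    | inl i, inr j => e j i
    | inr i, inl j => e i j
    end.

(* Main.v *)
Require Import Defs.
From mathcomp Require Import all_boot all_order all_algebra.
Import Order.TTheory GRing.Theory Num.Theory.
Local Open Scope ring_scope.

Lemma det_sym_block (T: comNzRingType) m (X Y : 'M[T]_m) :
  \det (block_mx X Y Y X) = \det (X+Y) * \det (X-Y).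
Proof.
have E: block_mx 1%:M 1%:M 0 1%:M *m block_mx X Y Y X *m block_mx 1%:M (-1%:M) 0 1%:M
   = block_mx (X+Y) 0 Y (X-Y).
  rewrite !mulmx_block !mul1mx !mul0mx ?add0r ?addr0 ?mulmx1 ?mul0mx ?addr0 ?mulmxN.
  by rewrite !mulmx0 !mulmx1 !addr0 (addrC Y X) addNr (addrC (-Y)).
by rewrite -(det_lblock (X+Y) Y (X-Y)) -E !det_mulmx !det_ublock !det1 !mul1r mulr1.
Qed.

Lemma splitl m n (i : 'I_m) : split (lshift n i) = inl i.
Proof. exact: (unsplitK (inl _ i)). Qed.
Lemma splitr m n (i : 'I_n) : split (rshift m i) = inr i.
Proof. exact: (unsplitK (inr _ i)). Qed.

Lemma deg_l n (e : rel 'I_n) (hs : symmetric e) i :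
  degree (double_graph e) (lshift n i) = (degree e i * 2)%N.
Proof.
rewrite /degree -!sum1_card big_split_ord /=.
rewrite /double_graph.
under eq_bigl do rewrite inE splitl splitl.
under [X in (_ + X)%N]eq_bigl do rewrite inE splitl splitr hs.
rewrite muln2 -addnn; congr (_ + _); apply: eq_bigl => j; by rewrite inE.
Qed.

Lemma deg_r n (e : rel 'I_n) i :
  degree (double_graph e) (rshift n i) = (degree e i * 2)%N.
Proof.
rewrite /degree -!sum1_card big_split_ord /=.
rewrite /double_graph.
under eq_bigl do rewrite inE splitr splitl.
under [X in (_ + X)%N]eq_bigl do rewrite inE splitr splitr.
rewrite muln2 -addnn; congr (_ + _); apply: eq_bigl => j; by rewrite inE.
Qed.

Lemma iterX (R : comNzRingType) n (p : {poly R}) : iter n (GRing.mul p) 1 = p ^+ n.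
Proof. by elim: n => [|n IH] //=; rewrite IH exprS. Qed.

Lemma half2 (R : realFieldType) (a d : R) : a / (d * 2) = a/d/2.
Proof. by rewrite invfM mulrA. Qed.

Lemma half_add (R : realFieldType) (a : R) : a/2 + a/2 = a.
Proof. by rewrite -mulr2n -[_ *+ 2]mulr_natr divfK // pnatr_eq0. Qed.

Lemma half_eq (R : realFieldType) (d a : R) : d - a/2 = d - a + a/2.
Proof.
have h : a = a/2 + a/2.
  by rewrite -mulr2n -[_ *+ 2]mulr_natr divfK // pnatr_eq0.
by rewrite {2}h opprD addrA subrK.
Qed.

Theorem theorem4 (R : realFieldType) (n : nat) (e : rel 'I_n)
  (hsimple : simple_graph e) (hconn : connected_graph e) (hiso : no_isolated e)
  (s : seq R) :
  eigenvalues_mult (norm_laplacian R e) s ->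
  eigenvalues_mult (norm_laplacian R (double_graph e)) (s ++ nseq n 1).
Proof.
rewrite /eigenvalues_mult => hs.
have [hsym _] := hsimple.
set L := norm_laplacian R e.
set Y : 'M[{poly R}]_n :=
  map_mx polyC (\matrix_(i, j) ((e i j)%:R / (degree e i)%:R / 2 : R)).
set X := char_poly_mx L - Y.
have E : char_poly_mx (norm_laplacian R (double_graph e)) = block_mx X Y Y X.
  apply/matrixP => a b; rewrite -(splitK a) -(splitK b).
  case: (split a) => i; case: (split b) => j /=;
    rewrite ?block_mxEul ?block_mxEur ?block_mxEdl ?block_mxEdr /X /Y /L /char_poly_mx
      !mxE ?eq_shift /double_graph ?splitl ?splitr ?deg_l ?deg_r // natrM half2.
  - by rewrite -addrA -opprD -polyCD half_eq.
  - by rewrite (hsym j i) /= ?mulr0n !sub0r -polyCN opprK.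
  - by rewrite /= ?mulr0n !sub0r -polyCN opprK.
  - by rewrite -addrA -opprD -polyCD half_eq.
have E2 : X - Y = ('X - 1)%:M.
  apply/matrixP => i j; rewrite /X /Y /L /char_poly_mx !mxE.
  rewrite -addrA -opprD -polyCD half_add -addrA -opprD -polyCD subrK.
  by case: (i == j); rewrite ?mulr1n ?mulr0n ?subr0.
rewrite /char_poly E det_sym_block subrK E2 det_scalar.
rewrite -/(char_poly L) hs big_cat /= big_nseq iterX.
done.
Qed.
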